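(* Let $G$ be a cograph and let $\sigma$ be a greedy coloring of $G$ with color set $\{1,2,\dots,\chi(G)\}$ ordered naturally. Let $G_1=(V_1,E_1)$ be a connected component of $G$. Then $\sigma(V_1)=\{1,\dots,\chi(G_1)\}$.
   Context: All graphs are finite, simple and undirected; $\chi(G)$ is the chromatic number. A cograph is a graph that is $K_1$, or a disjoint union of cographs, or a join of cographs. A greedy coloring of $G$ with ordered color set $1<2<\dots$ is obtained by processing the vertices of $G$ in some order and assigning to each vertex the smallest color not already assigned to one of its previously processed neighbors. (For cographs, every greedy coloring uses exactly $\chi(G)$ colors.) *)

(* Defs.v *)
From mathcomp Require Import all_boot.
Set Implicit Arguments. Unset Strict Implicit. Unset Printing Implicit Defensive.

Section Graphs.
Variable T : finType.

Definition simple_graph (e : rel T) := symmetric e /\ irreflexive e.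

Inductive cograph_on (e : rel T) : {set T} -> Prop :=
| cg_single x : cograph_on e [set x]
| cg_union (A B : {set T}) :
    A != set0 -> B != set0 -> [disjoint A & B] ->
    cograph_on e A -> cograph_on e B ->
    (forall x y, x \in A -> y \in B -> ~~ e x y) ->
    cograph_on e (A :|: B)
| cg_join (A B : {set T}) :
    A != set0 -> B != set0 -> [disjoint A & B] ->
    cograph_on e A -> cograph_on e B ->
    (forall x y, x \in A -> y \in B -> e x y) ->
    cograph_on e (A :|: B).

Definition cograph (e : rel T) := cograph_on e [set: T].

Definition colorable_on (e : rel T) (S : {set T}) (k : nat) : bool :=
  [exists f : {ffun T -> 'I_k},
     [forall x in S, forall y in S, e x y ==> (f x != f y)]].

Lemma colorable_on_exists (e : rel T) (S : {set T}) :
  irreflexive e -> exists k, colorable_on e S k.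
Proof.
move=> irr; exists #|T|; apply/existsP; exists [ffun x => enum_rank x].
apply/forallP => x; apply/implyP => _; apply/forallP => y; apply/implyP => _.
apply/implyP => exy; rewrite !ffunE; apply/negP => /eqP /enum_rank_inj exy'.
by move: exy; rewrite exy' irr.
Qed.

Definition chi_on (e : rel T) (irr : irreflexive e) (S : {set T}) : nat :=
  ex_minn (colorable_on_exists S irr).

Definition component (e : rel T) (x : T) : {set T} := [set y | connect e x y].

Definition greedy_coloring (e : rel T) (sigma : T -> nat) : Prop :=
  exists s : seq T, uniq s /\ (forall v, v \in s) /\
    forall v, let N := [seq sigma u | u <- s & (index u s < index v s) && e u v] in
      [/\ 0 < sigma v, sigma v \notin N &
          forall c, 0 < c < sigma v -> c \in N].

End Graphs.

(* Main.v *)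
Require Import Defs.
From mathcomp Require Import all_boot.
From mathcomp Require Import zify.
Set Implicit Arguments. Unset Strict Implicit. Unset Printing Implicit Defensive.

Section Aux.
Variable T : finType.
Variable e : rel T.
Hypothesis hirr : irreflexive e.
Hypothesis hsym : symmetric e.

Definition proper_on (g : T -> nat) (S : {set T}) :=
  forall x y, x \in S -> y \in S -> e x y -> g x != g y.

Definition img (g : T -> nat) (S : {set T}) := undup [seq g x | x <- enum S].

Lemma imgP g (S : {set T}) c : reflect (exists2 x, x \in S & g x = c) (c \in img g S).
Proof.
rewrite /img mem_undup; apply: (iffP mapP).
  by case=> x; rewrite mem_enum => xS ->; exists x.
by case=> x xS <-; exists x; rewrite ?mem_enum.
Qed.

Lemma img_uniq g S : uniq (img g S).
Proof. exact: undup_uniq. Qed.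

Lemma col_of_nat (S : {set T}) g n : S != set0 -> proper_on g S ->
  (forall x, x \in S -> g x < n) -> colorable_on e S n.
Proof.
case/set0Pn=> x0 x0S pg lt.
case: n lt => [|n] lt; first by have := lt _ x0S.
apply/existsP; exists [ffun x => inord (g x) : 'I_n.+1].
apply/forallP=> x; apply/implyP=> xS; apply/forallP=> y; apply/implyP=> yS.
apply/implyP=> exy; rewrite !ffunE; apply/negP=> /eqP H.
have := congr1 val H; rewrite /= !inordK ?lt //; apply/eqP; exact: pg.
Qed.

Lemma chi_le (S : {set T}) g : S != set0 -> proper_on g S -> chi_on hirr S <= size (img g S).
Proof.
move=> S0 pg.
have col : colorable_on e S (size (img g S)).
  apply: (col_of_nat (g := fun x => index (g x) (img g S))) => //.
    move=> x y xS yS exy; apply/negP=> /eqP /index_inj.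
    have hx : g x \in img g S by apply/imgP; exists x.
    have hy : g y \in img g S by apply/imgP; exists y.
    by move=> /(_ 0 hx hy) /eqP; apply/negP; apply: pg.
  by move=> x xS; rewrite index_mem; apply/imgP; exists x.
rewrite /chi_on; case: ex_minnP => m _ min; exact: min.
Qed.

Lemma chi_col (S : {set T}) : exists g, proper_on g S /\ forall x, x \in S -> g x < chi_on hirr S.
Proof.
rewrite /chi_on; case: ex_minnP => m /existsP [f /forallP hf] _.
exists (fun x => val (f x)); split => [x y xS yS exy|x _]; last exact: ltn_ord.
by move: (hf x); rewrite xS /= => /forallP /(_ y); rewrite yS exy.
Qed.

Lemma chi_single x : 1 <= chi_on hirr [set x].
Proof.
rewrite /chi_on; case: ex_minnP => m /existsP [f _] _.
by case: m f => [|m] // f; case: (f x).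
Qed.

Lemma chi_mono (S' S : {set T}) : S' != set0 -> S' \subset S -> chi_on hirr S' <= chi_on hirr S.
Proof.
move=> S0 sub; have [g [pg lt]] := chi_col S.
have col : colorable_on e S' (chi_on hirr S).
  apply: (col_of_nat (g := g)) => //.
    by move=> x y xS yS; apply: pg; apply: (subsetP sub).
  by move=> x xS; apply: lt; apply: (subsetP sub).
rewrite {1}/chi_on; case: ex_minnP => m _ min; exact: min.
Qed.

Lemma chi_join A B : A != set0 -> B != set0 ->
  (forall x y, x \in A -> y \in B -> e x y) ->
  chi_on hirr A + chi_on hirr B <= chi_on hirr (A :|: B).
Proof.
move=> A0 B0 eAB; have [g [pg lt]] := chi_col (A :|: B).
have pA : proper_on g A by move=> x y xS yS; apply: pg; rewrite inE ?xS ?yS.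
have pB : proper_on g B by move=> x y xS yS; apply: pg; rewrite inE ?xS ?yS ?orbT.
apply: leq_trans (leq_add (chi_le A0 pA) (chi_le B0 pB)) _.
rewrite -size_cat -(size_iota 0 (chi_on hirr (A :|: B))).
apply: uniq_leq_size.
  rewrite cat_uniq !img_uniq /= ?andbT; apply/hasPn=> c /imgP [y yB <-].
  apply/negP=> /imgP [x xA] /eqP; apply/negP; apply: pg; rewrite ?inE ?xA ?yB ?orbT //.
  exact: eAB.
move=> c; rewrite mem_cat mem_iota add0n => /orP [] /imgP [x xS <-]; apply: lt;
  by rewrite inE xS ?orbT.
Qed.

Lemma cograph_sub S : cograph_on e S -> forall S' : {set T}, S' \subset S -> S' != set0 ->
  cograph_on e S'.
Proof.
elim=> [x|A B A0 B0 dAB _ IHA _ IHB eAB|A B A0 B0 dAB _ IHA _ IHB eAB] S' sub S0.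
- suff -> : S' = [set x] by constructor.
  apply/eqP; rewrite eqEsubset sub /=; case/set0Pn: S0 => y yS.
  by move: (subsetP sub y yS); rewrite inE => /eqP <-; rewrite sub1set.
- have eS : S' = (S' :&: A) :|: (S' :&: B).
    by rewrite -setIUr; apply/esym/setIidPl.
  have [A'0|A'n] := eqVneq (S' :&: A) set0.
    apply: IHB => //; move: eS; rewrite A'0 set0U => ->; exact: subsetIr.
  have [B'0|B'n] := eqVneq (S' :&: B) set0.
    apply: IHA => //; move: eS; rewrite B'0 setU0 => ->; exact: subsetIr.
  rewrite eS; apply: cg_union => //.
  + by apply: disjointWl (subsetIr _ _) _; apply: disjointWr (subsetIr _ _) _.
  + exact: IHA (subsetIr _ _) A'n.
  + exact: IHB (subsetIr _ _) B'n.
  + by move=> x y; rewrite !inE => /andP [_ ?] /andP [_ ?]; apply: eAB.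
- have eS : S' = (S' :&: A) :|: (S' :&: B).
    by rewrite -setIUr; apply/esym/setIidPl.
  have [A'0|A'n] := eqVneq (S' :&: A) set0.
    apply: IHB => //; move: eS; rewrite A'0 set0U => ->; exact: subsetIr.
  have [B'0|B'n] := eqVneq (S' :&: B) set0.
    apply: IHA => //; move: eS; rewrite B'0 setU0 => ->; exact: subsetIr.
  rewrite eS; apply: cg_join => //.
  + by apply: disjointWl (subsetIr _ _) _; apply: disjointWr (subsetIr _ _) _.
  + exact: IHA (subsetIr _ _) A'n.
  + exact: IHB (subsetIr _ _) B'n.
  + by move=> x y; rewrite !inE => /andP [_ ?] /andP [_ ?]; apply: eAB.
Qed.

Definition Pgr (S : {set T}) g := proper_on g S /\
  forall v w, v \in S -> w \in S -> g w < g v ->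
    exists u, [/\ u \in S, e u v & g u = g w].

Lemma argmax (S : {set T}) g : S != set0 -> exists2 v, v \in S & forall w, w \in S -> g w <= g v.
Proof.
case/set0Pn=> x0 x0S; case: (arg_maxnP g x0S) => v vS hv; by exists v.
Qed.

Lemma Pgr_max (S A : {set T}) g : Pgr S g -> A \subset S ->
  (forall u v, u \in S -> v \in A -> e u v -> u \in A) ->
  forall v, v \in A -> (forall w, w \in S -> g w <= g v) ->
  size (img g S) <= size (img g A).
Proof.
move=> [pg hg] sub cl v vA mx; apply: uniq_leq_size; first exact: img_uniq.
move=> c /imgP [w wS <-]; apply/imgP.
have vS : v \in S by apply: (subsetP sub).
have := mx w wS; rewrite leq_eqVlt => /orP [/eqP ->|lt]; first by exists v.
have [u [uS euv <-]] := hg v w vS wS lt; exists u => //; exact: cl euv.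
Qed.

Lemma Pgr_restrict (S A : {set T}) g : Pgr S g -> A \subset S ->
  (forall u v w, u \in S -> v \in A -> w \in A -> e u v -> g u = g w -> u \in A) ->
  Pgr A g.
Proof.
move=> [pg hg] sub cl; split.
  by move=> x y xA yA; apply: pg; apply: (subsetP sub).
move=> v w vA wA lt.
have [u [uS euv guw]] := hg v w (subsetP sub v vA) (subsetP sub w wA) lt.
by exists u; split => //; exact: (cl u v w uS vA wA euv guw).
Qed.

Lemma main_claim S : cograph_on e S -> forall g, Pgr S g ->
  size (img g S) <= chi_on hirr S.
Proof.
elim=> [x|A B A0 B0 dAB _ IHA _ IHB eAB|A B A0 B0 dAB _ IHA _ IHB eAB] g hP.
- apply: leq_trans (chi_single x); rewrite /img enum_set1 /=; by [].
- have SA : A \subset A :|: B by apply: subsetUl.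
  have SB : B \subset A :|: B by apply: subsetUr.
  have clA : forall u v, u \in A :|: B -> v \in A -> e u v -> u \in A.
    move=> u v; rewrite inE => /orP [//|uB] vA euv.
    by move: (eAB v u vA uB); rewrite hsym euv.
  have clB : forall u v, u \in A :|: B -> v \in B -> e u v -> u \in B.
    move=> u v; rewrite inE => /orP [uA|//] vB euv.
    by move: (eAB u v uA vB); rewrite euv.
  have S0 : A :|: B != set0.
    by case/set0Pn: A0 => a aA; apply/set0Pn; exists a; rewrite inE aA.
  have [v vS mx] := argmax g S0.
  move: (vS); rewrite inE => /orP [vA|vB].
    apply: leq_trans (Pgr_max hP SA clA vA mx) _.
    apply: leq_trans (chi_mono A0 SA).
    apply: IHA; apply: Pgr_restrict hP SA _ => u v' w uS v'A _ euv _; exact: clA euv.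
  apply: leq_trans (Pgr_max hP SB clB vB mx) _.
  apply: leq_trans (chi_mono B0 SB).
  apply: IHB; apply: Pgr_restrict hP SB _ => u v' w uS v'B _ euv _; exact: clB euv.
- have SA : A \subset A :|: B by apply: subsetUl.
  have SB : B \subset A :|: B by apply: subsetUr.
  have [pg _] := hP.
  have hA : Pgr A g.
    apply: Pgr_restrict hP SA _ => u v w; rewrite inE => /orP [//|uB] vA wA euv guw.
    exfalso; move: (pg w u); rewrite inE wA inE uB orbT guw eqxx => /(_ isT isT).
    by move/(_ (eAB w u wA uB)).
  have hB : Pgr B g.
    apply: Pgr_restrict hP SB _ => u v w; rewrite inE => /orP [uA|//] vB wB euv guw.
    exfalso; move: (pg u w); rewrite inE uA inE wB orbT guw eqxx => /(_ isT isT).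
    by move/(_ (eAB u w uA wB)).
  apply: leq_trans (chi_join A0 B0 eAB).
  apply: leq_trans (leq_add (IHA g hA) (IHB g hB)).
  rewrite -size_cat; apply: uniq_leq_size; first exact: img_uniq.
  move=> c /imgP [x]; rewrite inE mem_cat => /orP [] xS <-;
    [apply/orP; left|apply/orP; right]; apply/imgP; by exists x.
Qed.

End Aux.

Theorem lemma4 (T : finType) (e : rel T) (hsym : symmetric e)
  (hirr : irreflexive e) (hco : cograph e) (sigma : T -> nat)
  (hgr : greedy_coloring e sigma) (V1 : {set T})
  (hV1 : exists x, V1 = component e x) :
  forall c, (exists2 v, v \in V1 & sigma v = c) <-> (1 <= c <= chi_on hirr V1).
Proof.
have [s [us [alls hs]]] := hgr.
have [x0 ->] := hV1.
set V := component e x0.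
have cl : forall u v, v \in V -> e u v -> u \in V.
  move=> u v; rewrite !inE => cv euv; apply: connect_trans cv _.
  by apply: connect1; rewrite hsym.
have x0V : x0 \in V by rewrite inE connect0.
have V0 : V != set0 by apply/set0Pn; exists x0.
have inN : forall v c, 0 < c < sigma v -> exists u, [/\ u \in V -> True, e u v & sigma u = c].
  move=> v c hc; have [_ _ /(_ c hc)] := hs v.
  case/mapP=> u; rewrite mem_filter => /andP [/andP [_ euv] _] ->; by exists u.
have pg : proper_on e sigma V.
  have key : forall x y, index x s < index y s -> e x y -> sigma x != sigma y.
    move=> x y lt exy; have [_ nN _] := hs y; apply/eqP=> eq; move: nN.
    by rewrite -eq; apply/negP/negPn/mapP; exists x; rewrite // mem_filter lt exy alls.
  move=> x y _ _ exy; case: (ltngtP (index x s) (index y s)) => h.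
  - exact: key.
  - by rewrite eq_sym; apply: key; rewrite // hsym.
  - by move: exy; rewrite (index_inj x (alls x) (alls y) h) hirr.
have hP : Pgr e V sigma.
  split => // v w vV wV lt.
  have [pos _ _] := hs w.
  have hc : 0 < sigma w < sigma v by rewrite pos lt.
  have [u [_ euv eu]] := inN v (sigma w) hc.
  by exists u; split => //; apply: cl euv.
have cV : cograph_on e V.
  by apply: cograph_sub hco _ (subsetT V) V0.
have le1 := main_claim hirr hsym cV hP.
have [m mV mx] := argmax sigma V0.
have attained : forall c, (exists2 v, v \in V & sigma v = c) <-> (1 <= c <= sigma m).
  move=> c; split.
    case=> v vV <-; have [pos _ _] := hs v; by rewrite pos mx.
  case/andP=> c1; rewrite leq_eqVlt => /orP [/eqP ->|lt]; first by exists m.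
  have hc : 0 < c < sigma m by rewrite c1 lt.
  have [u [_ eum <-]] := inN m c hc; exists u => //; exact: cl eum.
have mle : sigma m <= size (img sigma V).
  rewrite -(size_iota 1 (sigma m)); apply: uniq_leq_size; first exact: iota_uniq.
  move=> c; rewrite mem_iota => hc; apply/imgP; apply/attained.
  by move: hc; rewrite add1n ltnS.
have chile : chi_on hirr V <= sigma m.
  have col : colorable_on e V (sigma m).
    apply: (col_of_nat (g := fun x => (sigma x).-1)) => //.
      move=> x y xV yV exy; have [px _ _] := hs x; have [py _ _] := hs y.
      have := pg x y xV yV exy; apply: contra => /eqP h; apply/eqP; lia.
    move=> x xV; have [px _ _] := hs x; have := mx x xV; lia.
  rewrite /chi_on; case: ex_minnP => k _ min; exact: min.
have -> : chi_on hirr V = sigma m by apply/eqP; rewrite eqn_leq chile (leq_trans mle le1).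
exact: attained.
Qed.
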